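(* Let $-D/2\le x_C<x_B\le D/2$. For $m\in\{B,C\}$ let $r_2^m(r_1)$ denote the boundary function of $\mathcal{C}_f(x_m)$, i.e. $r_2^m(r_1)=\max\{r_2:(r_1,r_2)\in\mathcal{C}_f(x_m)\}$ for $0\le r_1\le r_{1,\max}^m$, where $r_{k,\max}^m=\log_2(1+\bar P h_k(x_m))$. Then the curves $r_2^B(r_1)$ and $r_2^C(r_1)$ have exactly one intersection point $(\bar r_1^{BC},\bar r_2^{BC})$, and it satisfies $0<\bar r_1^{BC}<r_{1,\max}^B$ and $0<\bar r_2^{BC}<r_{2,\max}^C$. Furthermore, $r_2^B(r_1)>r_2^C(r_1)$ for $0\le r_1<\bar r_1^{BC}$, and $r_2^B(r_1)<r_2^C(r_1)$ for $\bar r_1^{BC}<r_1\le r_{1,\max}^B$.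
   Context: Fix $D>0$, $H>0$, $\beta_0>0$, $\bar P>0$. Ground users GU 1, GU 2 are at horizontal positions $x_1=-D/2$, $x_2=D/2$; for a UAV at horizontal position $x$ (altitude $H$), $h_k(x)=\beta_0/((x-x_k)^2+H^2)$. For $p_1,p_2\ge0$, $\mathcal{C}_{\rm MAC}(x,p_1,p_2)$ is the set of $(r_1,r_2)$, $r_1,r_2\ge0$, with $r_1\le\log_2(1+p_1h_1(x))$, $r_2\le\log_2(1+p_2h_2(x))$, $r_1+r_2\le\log_2(1+p_1h_1(x)+p_2h_2(x))$; the fixed-location capacity region is $\mathcal{C}_f(x)=\bigcup_{p_1,p_2\ge0,\,p_1+p_2\le\bar P}\mathcal{C}_{\rm MAC}(x,p_1,p_2)$. *)

(* Defs.v *)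
From HB Require Import structures.
From mathcomp Require Import all_boot all_order all_algebra.
From mathcomp Require Import all_classical all_reals all_analysis.
Set Implicit Arguments. Unset Strict Implicit. Unset Printing Implicit Defensive.
Import Order.TTheory GRing.Theory Num.Theory.
Local Open Scope classical_set_scope.
Local Open Scope ring_scope.

Section UAV.
Variable R : realType.

Definition log2 (x : R) : R := ln x / ln 2.

(* channel gains: GU 1 at -D/2, GU 2 at D/2, UAV at horizontal x, altitude H *)
Definition h1 (D H beta0 x : R) : R := beta0 / ((x - (- D / 2)) ^+ 2 + H ^+ 2).
Definition h2 (D H beta0 x : R) : R := beta0 / ((x - D / 2) ^+ 2 + H ^+ 2).

Definition C_MAC (D H beta0 x p1 p2 : R) : set (R * R) :=
  [set r | [/\ 0 <= r.1, 0 <= r.2,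
             r.1 <= log2 (1 + p1 * h1 D H beta0 x),
             r.2 <= log2 (1 + p2 * h2 D H beta0 x) &
             r.1 + r.2 <= log2 (1 + p1 * h1 D H beta0 x + p2 * h2 D H beta0 x)]].

Definition C_f (D H beta0 Pbar x : R) : set (R * R) :=
  [set r | exists p1 p2 : R, [/\ 0 <= p1, 0 <= p2, p1 + p2 <= Pbar &
                                 C_MAC D H beta0 x p1 p2 r]].

Definition r1max (D H beta0 Pbar x : R) : R := log2 (1 + Pbar * h1 D H beta0 x).
Definition r2max (D H beta0 Pbar x : R) : R := log2 (1 + Pbar * h2 D H beta0 x).

(* boundary function r_2(r_1) = max {r2 | (r1, r2) in C_f(x)} (taken as sup;
   the max is attained for 0 <= r1 <= r1max) *)
Definition bnd (D H beta0 Pbar x r1 : R) : R :=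
  sup [set r2 | C_f D H beta0 Pbar x (r1, r2)].

End UAV.

(* Main.v *)
Require Import Defs.
From HB Require Import structures.
From mathcomp Require Import all_boot all_order all_algebra.
From mathcomp Require Import all_classical all_reals all_analysis.
From mathcomp Require Import ring lra.
Import Order.TTheory GRing.Theory Num.Theory.
Import numFieldNormedType.Exports.
Local Open Scope classical_set_scope.
Local Open Scope ring_scope.

Section Aux.
Variable R : realType.
Implicit Types a b u w x y r : R.

Lemma alg1 a b (p1 p2 : R) u w : 0<a -> 0<b -> b<=a -> 0<=u -> 0<=w ->
  w <= p2 * b -> (1+u)*(1+w) <= 1+p1 * a+p2 * b -> u/a + w/b + u*w/a <= p1 + p2.
Proof.
move=> a0 b0 ba u0 w0 F E.
have e: a*b*(p1+p2 - (u/a + w/b + u*w/a)) = b*(1+p1 * a+p2 * b - (1+u)*(1+w)) + (a-b)*(p2*b - w).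
  by field; rewrite ?gt_eqF.
rewrite -subr_ge0 -(pmulr_rge0 _ (mulr_gt0 a0 b0)) e.
apply: addr_ge0; apply: mulr_ge0; lra.
Qed.

Lemma alg2 a b (p1 p2 : R) u w : 0<a -> 0<b -> a<=b -> 0<=u -> 0<=w ->
  u <= p1 * a -> (1+u)*(1+w) <= 1+p1 * a+p2 * b -> u/a + w/b + u*w/b <= p1 + p2.
Proof.
move=> a0 b0 ba u0 w0 F E.
have e: a*b*(p1+p2 - (u/a + w/b + u*w/b)) = a*(1+p1 * a+p2 * b - (1+u)*(1+w)) + (b-a)*(p1*a - u).
  by field; rewrite ?gt_eqF.
rewrite -subr_ge0 -(pmulr_rge0 _ (mulr_gt0 a0 b0)) e.
apply: addr_ge0; apply: mulr_ge0; lra.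
Qed.

Lemma ln2_gt0 : 0 < ln (2:R).
Proof. by apply: ln_gt0; rewrite ltr1n. Qed.

Lemma log2_le x y : 0 < x -> 0 < y -> (log2 x <= log2 y) = (x <= y).
Proof.
move=> x0 y0; rewrite /log2 ler_pM2r ?invr_gt0 ?ln2_gt0 //.
by rewrite ler_ln ?posrE.
Qed.

Lemma log2_lt x y : 0 < x -> 0 < y -> (log2 x < log2 y) = (x < y).
Proof.
move=> x0 y0; rewrite /log2 ltr_pM2r ?invr_gt0 ?ln2_gt0 //.
by rewrite ltr_ln ?posrE.
Qed.

Definition e2 r : R := expR (r * ln 2).

Lemma log2_e2 r : log2 (e2 r) = r.
Proof. by rewrite /log2 /e2 expRK mulfK // gt_eqF // ln2_gt0. Qed.

Lemma e2_gt0 r : 0 < e2 r.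
Proof. exact: expR_gt0. Qed.

Lemma e2_ge1 r : 0 <= r -> 1 <= e2 r.
Proof.
move=> r0; apply: le_trans (expR_ge1Dx _).
by rewrite lerDl mulr_ge0 // ltW // ln2_gt0.
Qed.

Lemma log2M x y : 0 < x -> 0 < y -> log2 (x * y) = log2 x + log2 y.
Proof. by move=> x0 y0; rewrite /log2 lnM ?posrE // mulrDl. Qed.

Lemma le_log2 r y : 0 < y -> (r <= log2 y) = (e2 r <= y).
Proof. by move=> y0; rewrite -(@log2_le _ _ (e2_gt0 r) y0) log2_e2. Qed.

Lemma le_log2' r y : 0 < y -> (log2 y <= r) = (y <= e2 r).
Proof. by move=> y0; rewrite -(@log2_le _ _ y0 (e2_gt0 r)) log2_e2. Qed.

Definition vf P a b u : R := (P - u / a) / (1 / b + u / Num.max a b).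

Lemma max_gt0 a b : 0 < a -> 0 < b -> 0 < Num.max a b.
Proof. by move=> a0 b0; rewrite lt_max a0. Qed.


Lemma log2_ge0 y : 1 <= y -> 0 <= log2 y.
Proof. by move=> y1; rewrite le_log2 ?(lt_le_trans ltr01) // /e2 mul0r expR0. Qed.

Lemma bnd_eq (D H beta0 P x r1 : R) : 0 < P -> 0 < h1 D H beta0 x -> 0 < h2 D H beta0 x ->
  0 <= r1 -> r1 <= r1max D H beta0 P x ->
  bnd D H beta0 P x r1 = log2 (1 + vf P (h1 D H beta0 x) (h2 D H beta0 x) (e2 r1 - 1)).
Proof.
move=> P0 a0 b0 r0 rm.
rewrite /bnd.
have CfE : forall r2, C_f D H beta0 P x (r1, r2) <-> exists p1 p2 : R,
   [/\ 0 <= p1, 0 <= p2, p1 + p2 <= P &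
       [/\ 0 <= r1, 0 <= r2, r1 <= log2 (1 + p1 * h1 D H beta0 x),
         r2 <= log2 (1 + p2 * h2 D H beta0 x) &
         r1 + r2 <= log2 (1 + p1 * h1 D H beta0 x + p2 * h2 D H beta0 x)]].
  by move=> r2; split.
move: CfE a0 b0 rm; rewrite /r1max.
set a := h1 D H beta0 x; set b := h2 D H beta0 x => CfE a0 b0 rm.
have [X1 X0] : 1 <= e2 r1 /\ 0 < e2 r1 by split; [exact: e2_ge1|exact: e2_gt0].
have uP : e2 r1 - 1 <= P * a.
  have pa : 0 < 1 + P * a by have := mulr_gt0 P0 a0; lra.
  by move: rm; rewrite le_log2 //; lra.
move: X1 X0 uP; set X := e2 r1; set u := X - 1 => X1 X0 uP.
have u0 : 0 <= u by rewrite /u; lra.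
have m0 : 0 < Num.max a b by rewrite lt_max a0.
have den0 : 0 < 1 / b + u / Num.max a b.
  by have := divr_gt0 ltr01 b0; have := divr_ge0 u0 (ltW m0); lra.
have Veq : vf P a b u * (1 / b + u / Num.max a b) = P - u / a.
  by rewrite /vf divfK // gt_eqF.
have V0 : 0 <= vf P a b u.
  apply: divr_ge0; last exact: ltW den0.
  rewrite subr_ge0 ler_pdivrMr //; lra.
move: Veq V0; set V := vf P a b u => Veq V0.
have key : forall r2, r1 + r2 = log2 (X * e2 r2).
  by move=> r2; rewrite log2M ?e2_gt0 // !log2_e2.
have hV : 0 < 1 + V by lra.
have keyV : r1 + log2 (1 + V) = log2 (X * (1 + V)).
  by rewrite log2M // log2_e2.
have hVu := mulr_ge0 V0 u0.
have mem : C_f D H beta0 P x (r1, log2 (1 + V)).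
  apply/CfE; case: (leP b a) => hab.
  - move: Veq; rewrite max_l // => Veq.
    exists ((1 + V) * u / a), (V / b); split.
    + by apply: divr_ge0; [apply: mulr_ge0; lra | lra].
    + by apply: divr_ge0; lra.
    + have -> : (1 + V) * u / a + V / b = u / a + V * (1 / b + u / a).
        by field; rewrite ?gt_eqF.
      by rewrite Veq; lra.
    + rewrite divfK ?gt_eqF // divfK ?gt_eqF //.
      split => //; first by apply: log2_ge0; lra.
      * rewrite le_log2; last by lra.
        by rewrite -/X; rewrite /u in hVu *; nra.
      * rewrite keyV log2_le; last 2 first.
        - by rewrite mulr_gt0.
        - by lra.
        by rewrite /u in hVu *; nra.
  - move: Veq; rewrite (max_r (ltW hab)) => Veq.
    exists (u / a), ((1 + u) * V / b); split.
    + by apply: divr_ge0; lra.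
    + by apply: divr_ge0; [apply: mulr_ge0; lra | lra].
    + have -> : u / a + (1 + u) * V / b = u / a + V * (1 / b + u / b).
        by field; rewrite ?gt_eqF.
      by rewrite Veq; lra.
    + rewrite divfK ?gt_eqF // divfK ?gt_eqF //.
      split => //; first by apply: log2_ge0; lra.
      * rewrite le_log2; last by lra.
        by rewrite -/X /u; lra.
      * rewrite log2_le; last 2 first.
        - by lra.
        - by lra.
        by lra.
      * rewrite keyV log2_le; last 2 first.
        - by rewrite mulr_gt0.
        - by lra.
        by rewrite /u in hVu *; nra.
have ub : forall r2, C_f D H beta0 P x (r1, r2) -> r2 <= log2 (1 + V).
  move=> r2 /CfE [p1 [p2 [p10 p20 pP [_ r20 h1' h2' h3']]]].
  have q1 := mulr_ge0 p10 (ltW a0); have q2 := mulr_ge0 p20 (ltW b0).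
  move: h1'; rewrite le_log2; last by lra.
  move=> h1'; rewrite -/X in h1'.
  move: h2'; rewrite le_log2; last by lra.
  move=> h2'.
  move: h3'; rewrite key log2_le; last 2 first.
  - by rewrite mulr_gt0 ?e2_gt0.
  - by lra.
  move=> h3'.
  have Y1 : 1 <= e2 r2 by exact: e2_ge1.
  move: h2' h3' Y1; set Y := e2 r2 => h2' h3' Y1.
  rewrite le_log2 // -/Y.
  suff : Y - 1 <= V by lra.
  rewrite -(ler_pM2r den0) Veq.
  case: (leP b a) => hab.
  - idtac.
    have := @alg1 a b p1 p2 u (Y - 1) a0 b0 hab u0.
    have -> : (Y - 1) * (1 / b + u / a) = (Y - 1) / b + u * (Y - 1) / a.
      by field; rewrite ?gt_eqF.
    have e1 : (1 + u) * (1 + (Y - 1)) = X * Y by rewrite /u; ring.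
    rewrite e1; lra.
  - idtac.
    have := @alg2 a b p1 p2 u (Y - 1) a0 b0 (ltW hab) u0.
    have -> : (Y - 1) * (1 / b + u / b) = (Y - 1) / b + u * (Y - 1) / b.
      by field; rewrite ?gt_eqF.
    have e1 : (1 + u) * (1 + (Y - 1)) = X * Y by rewrite /u; ring.
    rewrite e1 /u; lra.
apply/eqP; rewrite eq_le; apply/andP; split.
  by apply: ge_sup; [exists (log2 (1 + V)) | move=> r2 /ub].
apply: sup_upper_bound => //; split; first by exists (log2 (1 + V)).
by exists (log2 (1 + V)) => r2 /ub.
Qed.

Lemma e2_log2 y : 0 < y -> e2 (log2 y) = y.
Proof. by move=> y0; rewrite /e2 /log2 divfK ?gt_eqF ?ln2_gt0 // lnK ?posrE. Qed.

Lemma quad_sign (k l q0 T s u : R) :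
  0 < q0 -> k * (T * T) + l * T + q0 < 0 -> 0 <= s <= T ->
  k * (s * s) + l * s + q0 = 0 -> 0 <= u <= T ->
  (u < s -> 0 < k * (u * u) + l * u + q0) /\ (s < u -> k * (u * u) + l * u + q0 < 0).
Proof.
move=> q0p qT /andP[s0 sT] qs /andP[u0 uT].
have fact : forall v, k * (v * v) + l * v + q0 = (v - s) * (k * (v + s) + l).
  by move=> v; rewrite -[LHS]subr0 -qs; ring.
have s0' : 0 < s.
  rewrite lt_neqAle s0 andbT; apply/eqP => s0e.
  by move: qs q0p; rewrite -s0e !(mul0r, mulr0, add0r) => ->; rewrite ltxx.
have L0 : k * s + l < 0.
  have := fact 0; rewrite !(mul0r, mulr0, add0r, addr0) => e0.
  by move: q0p; rewrite e0 mulNr oppr_gt0 pmulr_rlt0.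
have sT' : s < T.
  rewrite lt_neqAle sT andbT; apply/eqP => sTe.
  by move: qT; rewrite -sTe qs ltxx.
have LT : k * (T + s) + l < 0.
  by move: qT; rewrite fact pmulr_rlt0 // subr_gt0.
have Lu : k * (u + s) + l < 0.
  have T0 : 0 < T by apply: lt_le_trans s0' sT.
  have e : k * (u + s) + l = ((T - u) * (k * s + l) + u * (k * (T + s) + l)) / T.
    by field; rewrite gt_eqF.
  rewrite e pmulr_llt0 ?invr_gt0 //.
  have hA : (T - u) * (k * s + l) <= 0.
    by nra.
  move: u0; rewrite le_eqVlt => /orP[/eqP <-|up].
    have : T * (k * s + l) < 0 by nra.
    by rewrite subr0 mul0r addr0.
  have hB : u * (k * (T + s) + l) < 0 by nra.
  by lra.
split => h; rewrite fact.
  by rewrite nmulr_rgt0 // subr_lt0.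
by rewrite pmulr_rlt0 // subr_gt0.
Qed.

Lemma log2_1 : log2 (1 : R) = 0.
Proof. by rewrite /log2 ln1 mul0r. Qed.

Lemma div_lt (c s1 s2 : R) : 0 < c -> 0 < s1 -> s1 < s2 -> c / s2 < c / s1.
Proof.
move=> c0 s10 s12; rewrite ltr_pM2l // ltf_pV2 ?posrE //.
exact: lt_trans s12.
Qed.

Lemma vf_ge0 (P a b u : R) : 0 < a -> 0 < b -> 0 <= u -> u <= P * a -> 0 <= vf P a b u.
Proof.
move=> a0 b0 u0 uP; have m0 : 0 < Num.max a b by rewrite lt_max a0.
apply: divr_ge0.
  by rewrite subr_ge0 ler_pdivrMr.
by have := divr_gt0 ltr01 b0; have := divr_ge0 u0 (ltW m0); lra.
Qed.

Lemma vf_gt0 (P a b u : R) : 0 < a -> 0 < b -> 0 <= u -> u < P * a -> 0 < vf P a b u.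
Proof.
move=> a0 b0 u0 uP; have m0 : 0 < Num.max a b by rewrite lt_max a0.
apply: divr_gt0.
  by rewrite subr_gt0 ltr_pdivrMr.
by have := divr_gt0 ltr01 b0; have := divr_ge0 u0 (ltW m0); lra.
Qed.

Lemma vf_lt (P c d u : R) : 0 < P -> 0 < c -> 0 < d -> 0 < u -> vf P c d u < P * d.
Proof.
move=> P0 c0 d0 u0; have m0 : 0 < Num.max c d by rewrite lt_max c0.
have den : 0 < 1 / d + u / Num.max c d.
  by have := divr_gt0 ltr01 d0; have := divr_ge0 (ltW u0) (ltW m0); lra.
have e : P * d * (1 / d + u / Num.max c d) = P + P * d * (u / Num.max c d).
  by field; rewrite !gt_eqF.
rewrite /vf ltr_pdivrMr // e.
have := divr_gt0 u0 c0; have := mulr_ge0 (mulr_ge0 (ltW P0) (ltW d0)) (divr_ge0 (ltW u0) (ltW m0)).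
lra.
Qed.

Lemma qcont (k l q : R) : continuous (fun u : R => k * (u * u) + l * u + q).
Proof. move=> u. apply: cvgD. apply: cvgD. apply: cvgM. exact: cvg_cst. apply: cvgM; exact: cvg_id.
 apply: cvgM. exact: cvg_cst. exact: cvg_id. exact: cvg_cst. Qed.

End Aux.
Arguments vf {R}.
Arguments e2 {R}.

Theorem lemma6 (R : realType) (D H beta0 Pbar xC xB : R) :
  0 < D -> 0 < H -> 0 < beta0 -> 0 < Pbar ->
  - D / 2 <= xC -> xC < xB -> xB <= D / 2 ->
  exists r1b : R,
    [/\ 0 < r1b < r1max D H beta0 Pbar xB,
        0 < bnd D H beta0 Pbar xB r1b < r2max D H beta0 Pbar xC,
        bnd D H beta0 Pbar xB r1b = bnd D H beta0 Pbar xC r1b &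
        [/\ (forall r1, 0 <= r1 <= r1max D H beta0 Pbar xB ->
           bnd D H beta0 Pbar xB r1 = bnd D H beta0 Pbar xC r1 -> r1 = r1b),
        (forall r1, 0 <= r1 < r1b ->
           bnd D H beta0 Pbar xB r1 > bnd D H beta0 Pbar xC r1) &
        (forall r1, r1b < r1 <= r1max D H beta0 Pbar xB ->
           bnd D H beta0 Pbar xB r1 < bnd D H beta0 Pbar xC r1)]].
Proof.
move=> D0 H0 be0 P0 hC hCB hB.
have H2 : 0 < H ^+ 2 by rewrite exprn_gt0.
have a0 : 0 < h1 D H beta0 xB by rewrite /h1 divr_gt0 // ltr_pwDr // sqr_ge0.
have b0 : 0 < h2 D H beta0 xB by rewrite /h2 divr_gt0 // ltr_pwDr // sqr_ge0.
have c0 : 0 < h1 D H beta0 xC by rewrite /h1 divr_gt0 // ltr_pwDr // sqr_ge0.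
have d0 : 0 < h2 D H beta0 xC by rewrite /h2 divr_gt0 // ltr_pwDr // sqr_ge0.
have ac : h1 D H beta0 xB < h1 D H beta0 xC.
  apply: div_lt => //; first by rewrite ltr_pwDr // sqr_ge0.
  rewrite ltrD2r; nra.
have db : h2 D H beta0 xC < h2 D H beta0 xB.
  apply: div_lt => //; first by rewrite ltr_pwDr // sqr_ge0.
  rewrite ltrD2r; nra.
have bndB := @bnd_eq R D H beta0 Pbar xB.
have bndC := @bnd_eq R D H beta0 Pbar xC.
move: bndB bndC a0 b0 c0 d0 ac db; rewrite /r2max /r1max.
set a := h1 D H beta0 xB; set b := h2 D H beta0 xB.
set c := h1 D H beta0 xC; set d := h2 D H beta0 xC.
move=> bndB bndC a0 b0 c0 d0 ac db.
have mB0 : 0 < Num.max a b by rewrite lt_max a0.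
have mC0 : 0 < Num.max c d by rewrite lt_max c0.
set mB := Num.max a b; set mC := Num.max c d.
move: mB0 mC0; rewrite -/mB -/mC => mB0 mC0.
set k := 1 / (c * mB) - 1 / (a * mC).
set l := Pbar / mC - 1 / (a * d) - Pbar / mB + 1 / (c * b).
set q0 := Pbar / d - Pbar / b.
pose Q u := k * (u * u) + l * u + q0.
have QE : forall u, Q u = (Pbar - u / a) * (1 / d + u / mC) - (Pbar - u / c) * (1 / b + u / mB).
  by move=> u; rewrite /Q /k /l /q0; field; rewrite !gt_eqF.
have DB0 : forall u, 0 <= u -> 0 < 1 / b + u / mB.
  by move=> u u0; have := divr_gt0 ltr01 b0; have := divr_ge0 u0 (ltW mB0); lra.
have DC0 : forall u, 0 <= u -> 0 < 1 / d + u / mC.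
  by move=> u u0; have := divr_gt0 ltr01 d0; have := divr_ge0 u0 (ltW mC0); lra.
have vdiff : forall u, 0 <= u ->
    vf Pbar a b u - vf Pbar c d u = Q u / ((1 / b + u / mB) * (1 / d + u / mC)).
  move=> u u0; rewrite QE /vf -/mB -/mC.
  have p1 : 0 < mC + u * d by have := mulr_ge0 u0 (ltW d0); lra.
  have p2 : 0 < mB + u * b by have := mulr_ge0 u0 (ltW b0); lra.
  by field; rewrite !gt_eqF.
set T := Pbar * a.
have T0 : 0 < T by rewrite mulr_gt0.
have q0p : 0 < q0.
  by rewrite /q0 subr_gt0; apply: div_lt.
have QT : Q T < 0.
  rewrite QE /T mulfK ?gt_eqF // subrr mul0r sub0r oppr_lt0.
  apply: mulr_gt0; last exact: DB0 (ltW T0).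
  by rewrite subr_gt0 ltr_pdivrMr // ltr_pM2l.
have [s sI Qs] : exists2 s, s \in `[0, T] & Q s = 0.
  apply: IVT; first exact: ltW.
    exact/continuous_subspaceT/qcont.
  have Q0 : Q 0 = q0 by rewrite /Q !(mulr0, mul0r, add0r).
  by rewrite Q0 ge_min le_max (ltW QT) (ltW q0p) orbT.
move: sI; rewrite in_itv /= => /andP[s0 sT].
have QS : forall u, 0 <= u <= T -> (u < s -> 0 < Q u) /\ (s < u -> Q u < 0).
  move=> u uI.
  have sI : 0 <= s <= T by rewrite s0 sT.
  exact: (@quad_sign R k l q0 T s u q0p QT sI Qs uI).
have s0' : 0 < s.
  rewrite lt_neqAle s0 andbT; apply/eqP => s0e.
  by move: Qs; rewrite -s0e /Q !(mulr0, mul0r, add0r) => q00; move: q0p; rewrite q00 ltxx.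
have sT' : s < T.
  rewrite lt_neqAle sT andbT; apply/eqP => sTe.
  by move: QT; rewrite -sTe Qs ltxx.
have rmBC : log2 (1 + Pbar * a) <= log2 (1 + Pbar * c).
  rewrite log2_le; last 2 first.
  - by have := mulr_gt0 P0 a0; lra.
  - by have := mulr_gt0 P0 c0; lra.
  by rewrite lerD2l ler_pM2l // ltW.
have Ub : forall r1, 0 <= r1 <= log2 (1 + Pbar * a) -> 0 <= e2 r1 - 1 <= T.
  move=> r1 /andP[r0 rm]; have := @e2_ge1 R r1 r0.
  have pa : 0 < 1 + Pbar * a by have := mulr_gt0 P0 a0; lra.
  move: rm; rewrite le_log2 // /T => rm; rewrite subr_ge0 => ->; lra.
have cmp : forall r1, 0 <= r1 <= log2 (1 + Pbar * a) ->
    [/\ 0 < Q (e2 r1 - 1) -> bnd D H beta0 Pbar xC r1 < bnd D H beta0 Pbar xB r1,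
        Q (e2 r1 - 1) < 0 -> bnd D H beta0 Pbar xB r1 < bnd D H beta0 Pbar xC r1 &
        Q (e2 r1 - 1) = 0 -> bnd D H beta0 Pbar xB r1 = bnd D H beta0 Pbar xC r1].
  move=> r1 rI; have /andP[u0 uT] := Ub r1 rI.
  move: rI => /andP[r0 rm].
  rewrite (bndB r1) // (bndC r1) //; last exact: le_trans rmBC.
  have vB0 : 0 <= vf Pbar a b (e2 r1 - 1) by apply: vf_ge0.
  have vC0 : 0 <= vf Pbar c d (e2 r1 - 1).
    by apply: vf_ge0 => //; apply: le_trans uT _; rewrite /T ler_pM2l // (ltW ac).
  have vd := vdiff (e2 r1 - 1) u0.
  have W0 := mulr_gt0 (DB0 _ u0) (DC0 _ u0).
  split => hQ.
  - rewrite log2_lt; try lra.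
    by rewrite ltrD2l -subr_gt0 vd divr_gt0.
  - rewrite log2_lt; try lra.
    by rewrite ltrD2l -subr_lt0 vd pmulr_llt0 ?invr_gt0.
  - by move: vd; rewrite hQ mul0r => /eqP; rewrite subr_eq0 => /eqP ->.
set r1b := log2 (1 + s).
have e2b : e2 r1b - 1 = s by rewrite e2_log2 ?addrK //; lra.
have rb0 : 0 < r1b by rewrite /r1b -log2_1 log2_lt //; lra.
have rbm : r1b < log2 (1 + Pbar * a).
  by rewrite /r1b -/T log2_lt; lra.
have rbI : 0 <= r1b <= log2 (1 + Pbar * a) by rewrite !ltW.
have ord : forall r1, (r1 < r1b) = (e2 r1 - 1 < s).
  move=> r1; rewrite -{1}(log2_e2 _ r1) log2_lt ?e2_gt0 //; last lra.
  by rewrite ltrBlDl addrC.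
have ord2 : forall r1, (r1b < r1) = (s < e2 r1 - 1).
  move=> r1; rewrite -{1}(log2_e2 _ r1) /r1b log2_lt ?e2_gt0 //; last lra.
  by apply/idP/idP => h; lra.
have [_ _ heq] := cmp r1b rbI.
have beq := heq ltac:(by rewrite e2b).
have rb0' : 0 <= r1b := ltW rb0.
have rbmB : r1b <= log2 (1 + Pbar * a) := ltW rbm.
have rbmC : r1b <= log2 (1 + Pbar * c) := le_trans (ltW rbm) rmBC.
exists r1b; split => //.
- by rewrite rb0.
- rewrite (bndB r1b) // e2b; apply/andP; split.
    rewrite -log2_1 log2_lt //; last by have := @vf_gt0 R Pbar a b s a0 b0 s0 sT'; lra.
    have := @vf_gt0 R Pbar a b s a0 b0 s0 sT'; lra.
  move: beq; rewrite (bndB r1b) // (bndC r1b) //.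
  rewrite e2b => ->.
  have := @vf_lt R Pbar c d s P0 c0 d0 s0'; have := @vf_ge0 R Pbar c d s c0 d0 s0.
  move=> hv1 hv2.
  have hs : s <= Pbar * c by apply: le_trans sT _; rewrite /T ler_pM2l // (ltW ac).
  by rewrite log2_lt; try lra.
- split.
  + move=> r1 rI hb; have [hU1 hU2 _] := cmp r1 rI.
    have [h1' h2'] := QS (e2 r1 - 1) (Ub r1 rI).
    case: (ltrgtP r1 r1b) => // hr.
    * have hu : e2 r1 - 1 < s by rewrite -ord.
      by move: (hU1 (h1' hu)); rewrite hb ltxx.
    * have hu : s < e2 r1 - 1 by rewrite -ord2.
      by move: (hU2 (h2' hu)); rewrite hb ltxx.
  + move=> r1 /andP[r0 rlt].
    have rI : 0 <= r1 <= log2 (1 + Pbar * a) by rewrite r0 /= ltW // (lt_trans rlt).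
    have [hU1 _ _] := cmp r1 rI.
    have [h1' _] := QS (e2 r1 - 1) (Ub r1 rI).
    by apply: hU1; apply: h1'; rewrite -ord.
  + move=> r1 /andP[rgt rm].
    have rI : 0 <= r1 <= log2 (1 + Pbar * a) by rewrite rm andbT ltW // (lt_trans rb0).
    have [_ hU2 _] := cmp r1 rI.
    have [_ h2'] := QS (e2 r1 - 1) (Ub r1 rI).
    apply: hU2; apply: h2'.
    by rewrite -ord2.
Qed.
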